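(* For $1\le k\le m<2n$, $\sigma_k^m:=p(v(k,m),v(k,m))$ equals $q^2$ if $m=\phi(k)$, and equals $q$ otherwise.
   Context: Let $\mathbf{k}$ be a field, $G$ an abelian group, $n\ge2$, $g_1,\dots,g_n\in G$, characters $\chi^1,\dots,\chi^n:G\to\mathbf{k}^*$, $p_{ij}=\chi^i(g_j)$. Fix $q\in\mathbf{k}^*$ and assume $p_{ii}=q$ ($1\le i<n$), $p_{nn}=q^2$, $p_{i,i-1}p_{i-1,i}=q^{-1}$ ($1<i<n$), $p_{n-1,n}p_{n,n-1}=q^{-2}$, $p_{ij}p_{ji}=1$ ($j>i+1$). For words $u,v$ in $x_1,\dots,x_n$, $p(u,v)=\chi^u(g_v)$, where $g_v$ (resp. $\chi^u$) is obtained by replacing each $x_i$ by $g_i$ (resp. $\chi^i$); $p$ is bimultiplicative. For $n<i<2n$, $x_i:=x_{2n-i}$; $\phi(i)=2n-i$; $v(k,m)$ is the word $x_kx_{k+1}\cdots x_m$. *)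

(* Defs.v *)
From mathcomp Require Import all_boot all_order all_algebra.
Set Implicit Arguments. Unset Strict Implicit. Unset Printing Implicit Defensive.
Import GRing.Theory.
Local Open Scope ring_scope.

(* The abelian group G is written additively (a zmodType); letters x_1..x_n
   are encoded by their indices (nat); a word is a seq nat. *)

Definition xidx (n i : nat) : nat := if (i <= n)%N then i else (2 * n - i)%N.

Definition phi (n i : nat) : nat := (2 * n - i)%N.

Definition vword (n k m : nat) : seq nat := [seq xidx n i | i <- iota k (m - k).+1].

Definition gword (G : zmodType) (g : nat -> G) (w : seq nat) : G := \sum_(a <- w) g a.

Definition chiword (K : fieldType) (G : zmodType) (chi : nat -> G -> K)
  (u : seq nat) (x : G) : K := \prod_(a <- u) chi a x.

Definition pw (K : fieldType) (G : zmodType) (chi : nat -> G -> K) (g : nat -> G)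
  (u v : seq nat) : K := chiword chi u (gword g v).

Definition pij (K : fieldType) (G : zmodType) (chi : nat -> G -> K) (g : nat -> G)
  (i j : nat) : K := chi i (g j).

Definition is_character (K : fieldType) (G : zmodType) (c : G -> K) : Prop :=
  (forall a b : G, c (a + b) = c a * c b) /\ (forall a : G, c a != 0).

(* Main.v *)
Require Import Defs.
From mathcomp Require Import all_boot all_order all_algebra.
From mathcomp Require Import ring zify.
Import GRing.Theory.
Local Open Scope ring_scope.

Theorem lemma3p3 (K : fieldType) (G : zmodType) (n : nat) (g : nat -> G)
  (chi : nat -> G -> K) (q : K) :
  (2 <= n)%N ->
  (forall i, (1 <= i <= n)%N -> is_character (chi i)) ->
  q != 0 ->
  (forall i, (1 <= i < n)%N -> pij chi g i i = q) ->
  pij chi g n n = q ^+ 2 ->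
  (forall i, (1 < i < n)%N -> pij chi g i i.-1 * pij chi g i.-1 i = q^-1) ->
  pij chi g n.-1 n * pij chi g n n.-1 = q ^- 2 ->
  (forall i j, (1 <= i)%N -> (i.+1 < j)%N -> (j <= n)%N ->
     pij chi g i j * pij chi g j i = 1) ->
  forall k m, (1 <= k)%N -> (k <= m)%N -> (m < 2 * n)%N ->
    pw chi g (vword n k m) (vword n k m) = (if m == phi n k then q ^+ 2 else q).
Proof.
move=> n2 hch q0 hd hdn hadj hadjn hfar.
have chi0 : forall i, (1 <= i <= n)%N -> chi i 0 = 1.
  move=> i hi; have [hm hnz] := hch i hi.
  have := hm 0 0; rewrite addr0 => e.
  have := hnz 0 => nz.
  apply: (mulfI nz); by rewrite mulr1 -e.
have chis : forall i (w : seq nat), (1 <= i <= n)%N ->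
    chi i (gword g w) = \prod_(a <- w) pij chi g i a.
  move=> i w hi; elim: w => [|a w IH].
    by rewrite /gword !big_nil chi0.
  by rewrite /gword !big_cons (hch i hi).1 -/(gword g w) IH.
pose inr (a : nat) := (1 <= a <= n)%N.
pose P a b := pij chi g a b * pij chi g b a.
have key : forall u x, all inr u -> inr x ->
   pw chi g (rcons u x) (rcons u x) =
   pw chi g u u * pij chi g x x * \prod_(a <- u) P a x.
  move=> u x hu hx.
  rewrite /pw /chiword /gword !big_rcons /= -/(gword g u) (hch x hx).1 chis //.
  rewrite /P big_split /=.
  have -> : \prod_(a <- u) chi a (gword g u + g x) =
     \prod_(a <- u) chi a (gword g u) * \prod_(a <- u) chi a (g x).
    rewrite -big_split /=; rewrite !big_seq; apply: eq_bigr => a ha.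
    by rewrite (hch a (allP hu a ha)).1.
  rewrite /pij. ring.
have Pfar : forall a b, (1 <= a)%N -> (a.+1 < b)%N -> (b <= n)%N -> P a b = 1.
  by move=> a b h1 h2 h3; rewrite /P hfar.
have Psym : forall a b, P a b = P b a by move=> a b; rewrite /P mulrC.
have Padj : forall a, (1 <= a)%N -> (a.+1 < n)%N -> P a a.+1 = q^-1.
  move=> a h1 h2; rewrite Psym /P -{3}[a]/(a.+1.-1) hadj //; lia.
have Padjn : P n.-1 n = q ^- 2 by rewrite /P.
have Pdiag : forall a, (1 <= a < n)%N -> P a a = q ^+ 2.
  by move=> a h; rewrite /P hd.
have one : forall (F : nat -> K) a b, (forall i, (a <= i < b)%N -> F i = 1) ->
    \prod_(a <= i < b) F i = 1.
  by move=> F a b h; rewrite big_nat; apply: big1 => i /h.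
have xin : forall i, (1 <= i < 2 * n)%N -> inr (xidx n i).
  move=> i hi; rewrite /inr /xidx; case: ifP => h; lia.
have vrec : forall k m, (k <= m)%N -> vword n k m.+1 = rcons (vword n k m) (xidx n m.+1).
  move=> k0 m0 h; rewrite /vword -map_rcons; congr map.
  rewrite -cats1 (_ : (m0.+1 - k0).+1 = (m0 - k0).+1 + 1)%N; last by lia.
  rewrite iotaD /=; do 3 f_equal; lia.
have vall : forall k m, (1 <= k)%N -> (k <= m)%N -> (m < 2 * n)%N -> all inr (vword n k m).
  move=> k0 m0 h1 h0 h2; apply/allP => a /mapP [i]; rewrite mem_iota => hi ->.
  apply: xin; lia.
have vprod : forall k m y, (k <= m)%N ->
    \prod_(a <- vword n k m) P a y = \prod_(k <= i < m.+1) P (xidx n i) y.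
  move=> k0 m0 y h; rewrite /vword big_map /index_iota.
  have -> : (m0.+1 - k0 = (m0 - k0).+1)%N by lia.
  by [].
move=> k m hk; elim: m => [|m IH] hkm hm; first by lia.
case: (eqVneq k m.+1) => [<-|hne].
  rewrite /vword subnn /= /pw /chiword /gword !big_cons !big_nil addr0 mulr1.
  rewrite -/(pij chi g _ _) /phi /xidx.
  case: (ltngtP k n) => h.
  - rewrite hd; last by lia.
    by case: (k =P (2 * n - k)%N) => // hh; lia.
  - rewrite ifF; last by lia.
    rewrite hd; last by lia.
    by case: (k =P (2 * n - k)%N) => // hh; lia.
  - subst k; rewrite hdn.
    by case: (n =P (2 * n - n)%N) => // hh; lia.
have hkm' : (k <= m)%N by lia.
rewrite vrec // key; last (by apply: xin; lia); last by apply: vall; lia.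
rewrite IH; [|lia|lia]. rewrite vprod //.
have xhi : forall i, (n < i)%N -> xidx n i = (2*n - i)%N.
  by move=> i h; rewrite /xidx leqNgt h.
have xlo : forall i, (i <= n)%N -> xidx n i = i.
  by move=> i h; rewrite /xidx h.
rewrite /phi.
case: (leqP m.+1 n) => hmn.
  rewrite xlo // big_nat_recr /=; last by lia.
  rewrite one; last first.
    move=> i hi; rewrite xlo; last by lia.
    apply: Pfar; lia.
  rewrite xlo; last by lia.
  have -> : (m == 2 * n - k)%N = false by apply/negbTE/eqP; lia.
  have -> : (m.+1 == 2 * n - k)%N = false by apply/negbTE/eqP; lia.
  case: (ltngtP m.+1 n) => hh; try lia.
    rewrite hd; last by lia.
    rewrite Padj; try lia. by field.
  have -> : m = n.-1 by lia.
  rewrite (prednK (ltnW n2)) Padjn hdn; by field.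
remember (2*n - m.+1)%N as y eqn:ey.
have hyx : xidx n m.+1 = y by rewrite xhi // ey.
rewrite hyx.
have hy1 : (1 <= y)%N by lia.
have hyn : (y < n)%N by lia.
have hyy : pij chi g y y = q by rewrite hd //; lia.
rewrite hyy.
case: (leqP k n) => hkn; last first.
  rewrite big_nat_recr /=; last by lia.
  rewrite one; last first.
    move=> i hi; rewrite xhi; last by lia.
    rewrite Psym; apply: Pfar; lia.
  rewrite xhi; last by lia.
  have -> : (2 * n - m = y.+1)%N by lia.
  rewrite Psym Padj; try lia.
  have -> : (m == 2 * n - k)%N = false by apply/negbTE/eqP; lia.
  have -> : (m.+1 == 2 * n - k)%N = false by apply/negbTE/eqP; lia.
  by field.
rewrite (big_cat_nat (n := n.+1)); [|lia|lia].
have hB : \prod_(n.+1 <= i < m.+1) P (xidx n i) y = if m == n then 1 else q^-1.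
  case: eqP => hmn'.
    by rewrite big_geq //; lia.
  rewrite big_nat_recr /=; last by lia.
  rewrite one; last first.
    move=> i hi; rewrite xhi; last by lia.
    rewrite Psym; apply: Pfar; lia.
  rewrite xhi; last by lia.
  have -> : (2 * n - m = y.+1)%N by lia.
  rewrite Psym Padj; try lia.
  by rewrite mul1r.
have hA0 : forall j, \prod_(j <= i < n.+1) P (xidx n i) y = \prod_(j <= i < n.+1) P i y.
  move=> j; rewrite !big_nat; apply: eq_bigr => i /andP[_ hi]; rewrite xlo //.
have hc : P y.+1 y = if m == n then q ^- 2 else q^-1.
  case: eqP => hmn'.
    have -> : y = n.-1 by lia.
    by rewrite (prednK (ltnW n2)) Psym Padjn.
  rewrite Psym Padj //; lia.
have hAtop : forall j, (y.+2 <= j)%N -> \prod_(j <= i < n.+1) P i y = 1.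
  move=> j hj; apply: one => i hi; rewrite Psym; apply: Pfar; lia.
rewrite hB hA0.
have hy2 : \prod_(y <= i < n.+1) P i y = q ^+ 2 * (if m == n then q ^- 2 else q^-1).
  rewrite big_ltn; last by lia.
  rewrite big_ltn; last by lia.
  rewrite hAtop // mulr1 -hc Pdiag //; lia.
case: (ltngtP k y) => hky.
- rewrite (big_cat_nat (n := y.-1)); [|lia|lia].
  rewrite one; last first.
    move=> i hi; apply: Pfar; lia.
  rewrite big_ltn; last by lia.
  rewrite (prednK hy1) hy2.
  have -> : P y.-1 y = q^-1.
    have {2}-> : y = y.-1.+1 by rewrite (prednK hy1).
    apply: Padj; lia.
  have -> : (m == 2 * n - k)%N = false by apply/negbTE/eqP; lia.
  have -> : (m.+1 == 2 * n - k)%N = false by apply/negbTE/eqP; lia.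
  case: eqP => hmn2; rewrite /=; try (exfalso; lia); by field.
- case: (ltngtP k y.+1) => hky'; try lia.
    have -> : (m == 2 * n - k)%N = false by apply/negbTE/eqP; lia.
    have -> : (m.+1 == 2 * n - k)%N = false by apply/negbTE/eqP; lia.
    rewrite hAtop; last by lia.
    case: eqP => hmn2; rewrite /=; try (exfalso; lia); by field.
  rewrite hky' big_ltn; last by lia.
  rewrite hAtop // hc.
  have -> : (m == 2 * n - y.+1)%N = true by apply/eqP; lia.
  have -> : (m.+1 == 2 * n - y.+1)%N = false by apply/negbTE/eqP; lia.
  case: eqP => hmn2; rewrite /=; try (exfalso; lia); by field.
- subst k; rewrite hy2.
  have -> : (m == 2 * n - y)%N = false by apply/negbTE/eqP; lia.
  have -> : (m.+1 == 2 * n - y)%N = true by apply/eqP; lia.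
  case: eqP => hmn2; rewrite /=; try (exfalso; lia); by field.
Qed.
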